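(* Let $\kappa$ be a regular cardinal and $G$ a graph. If there exists a cardinal $\lambda<\kappa$ such that $G$ is $(\kappa,\lambda)$-connected, then $K_\kappa$ is a minor of $G$.
   Context: A graph is a pair $(V,E)$ with $E\subseteq[V]^2$. For infinite cardinals $\kappa,\lambda$, a graph is $(\kappa,\lambda)$-connected if after the removal of any set of fewer than $\kappa$ vertices, the number of connected components of the remaining graph is non-zero and less than $\lambda$. $K_\kappa$ is the complete graph on $\kappa$ vertices. A graph $H$ is a minor of $G$ if there are pairwise disjoint non-empty vertex sets $(X_u)_{u\in V_H}$ of $G$, each inducing a connected subgraph, such that for each edge $\{u,v\}$ of $H$ some vertex of $X_u$ is adjacent in $G$ to some vertex of $X_v$. *)

(* Defs.v *)
(* Cardinals are represented by types (a cardinal = the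
   cardinality of a type); comparisons via injections. *)
From Stdlib Require Import Relations.

Set Implicit Arguments.

Definition card_le (A B : Type) : Prop :=
  exists f : A -> B, forall x y, f x = f y -> x = y.

Definition card_lt (A B : Type) : Prop := card_le A B /\ ~ card_le B A.

Definition infinite_type (A : Type) : Prop := card_le nat A.

Definition regular (K : Type) : Prop :=
  infinite_type K /\
  forall (I : Type) (F : I -> K -> Prop),
    card_lt I K ->
    (forall i, card_lt {x : K | F i x} K) ->
    exists x : K, forall i, ~ F i x.

Record graph (V : Type) : Type := Graph {
  adj : V -> V -> Prop;
  adj_sym : forall x y, adj x y -> adj y x;
  adj_irrefl : forall x, ~ adj x x
}.

Definition conn_in (V : Type) (G : graph V) (A : V -> Prop) (x y : V) : Prop :=
  A x /\ A y /\
  clos_refl_trans V (fun u v => A u /\ A v /\ adj G u v) x y.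

Definition components (V : Type) (G : graph V) (S : V -> Prop) : Type :=
  { C : V -> Prop |
    exists x, ~ S x /\ C = conn_in G (fun v => ~ S v) x }.

Definition kl_connected (V : Type) (G : graph V) (K L : Type) : Prop :=
  forall S : V -> Prop, card_lt {v : V | S v} K ->
    inhabited (components G S) /\ card_lt (components G S) L.

Definition complete_minor (V : Type) (G : graph V) (K : Type) : Prop :=
  exists X : K -> V -> Prop,
    (forall u, exists x, X u x) /\
    (forall u v x, u <> v -> X u x -> X v x -> False) /\
    (forall u x y, X u x -> X u y -> conn_in G (X u) x y) /\
    (forall u v, u <> v -> exists x y, X u x /\ X v y /\ adj G x y).

(* Main.v *)
From mathcomp Require Import ssreflect ssrfun ssrbool eqtype ssrnat seq.
From mathcomp Require Import boolp wochoice.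
From Stdlib Require Import Relations Wellfounded.
Require Import Defs.
Set Implicit Arguments.

Lemma sig_inj (T : Type) (P : T -> Prop) (u v : {x : T | P x}) :
  proj1_sig u = proj1_sig v -> u = v.
Proof.
case: u => x px; case: v => y py /= E; subst y.
by rewrite (Prop_irrelevance px py).
Qed.

Lemma cle_refl (A : Type) : card_le A A.
Proof. by exists id. Qed.

Lemma cle_trans (A B C : Type) : card_le A B -> card_le B C -> card_le A C.
Proof.
move=> [f Hf] [g Hg]; exists (fun x => g (f x)) => x y E; apply: Hf; exact: Hg.
Qed.

Lemma clt_le_trans (A B C : Type) : card_lt A B -> card_le B C -> card_lt A C.
Proof.
move=> [AB nBA] BC; split; first exact: cle_trans AB BC.
by move=> CA; apply: nBA; apply: cle_trans BC CA.
Qed.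

Lemma cle_lt_trans (A B C : Type) : card_le A B -> card_lt B C -> card_lt A C.
Proof.
move=> AB [BC nCB]; split; first exact: cle_trans AB BC.
by move=> CA; apply: nCB; apply: cle_trans CA AB.
Qed.

Lemma cle_sig (A : Type) (P : A -> Prop) : card_le {x | P x} A.
Proof. by exists (@proj1_sig _ _) => x y; apply: sig_inj. Qed.

Lemma cle_sig_sub (A : Type) (P Q : A -> Prop) :
  (forall x, P x -> Q x) -> card_le {x | P x} {x | Q x}.
Proof.
move=> PQ; exists (fun u => exist Q (proj1_sig u) (PQ _ (proj2_sig u))) => u v E.
by apply: sig_inj; move: E => /(congr1 (@proj1_sig _ _)).
Qed.
Lemma wo_exists (T : Type) : exists lt : T -> T -> Prop,
  well_founded lt /\ (forall x y, lt x y \/ x = y \/ lt y x).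
Proof.
elim/Peq: T => T.
have [R wR] := well_ordering_principle T.
have refl : forall x, R x x.
  move=> x; have [|z [[Az lb] _]] := wR (pred1 x); first by exists x; rewrite inE.
  by move: Az; rewrite inE => /eqP Ez; subst z; apply: lb; rewrite inE.
have tot : forall x y, R x y \/ R y x.
  move=> x y.
  have [|z [[Az lb] _]] := wR [pred t | (t == x) || (t == y)]; first by exists x; rewrite inE eqxx.
  move: Az; rewrite inE => /orP[/eqP Ez|/eqP Ez]; subst z.
    by left; apply: lb; rewrite inE eqxx orbT.
  by right; apply: lb; rewrite inE eqxx.
have antis : forall x y, R x y -> R y x -> x = y.
  move=> x y Rxy Ryx.
  have [|z [_ U]] := wR [pred t | (t == x) || (t == y)]; first by exists x; rewrite inE eqxx.
  have ex := U x; have ey := U y.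
  rewrite -ex ?ey //; split; rewrite ?inE ?eqxx ?orbT //;
   move=> t; rewrite inE => /orP[/eqP->|/eqP->] //.
have minP : forall A : T -> Prop, (exists x, A x) -> exists z, A z /\ forall y, A y -> R z y.
  move=> A [x Ax]. have [|z [[Az lb] _]] := wR [pred t | `[< A t >] ].
    by exists x; rewrite inE; apply/asboolP.
  exists z; split; first by move: Az; rewrite inE => /asboolP.
  by move=> y Ay; apply: lb; rewrite inE; apply/asboolP.
exists (fun x y => R x y /\ x <> y); split.
  move=> x; apply: contrapT => nAx.
  have [|z [nAz minz]] := minP (fun t => ~ Acc (fun x y => R x y /\ x <> y) t); first by exists x.
  apply: nAz; constructor => y [Ryz nyz]; apply: contrapT => nAy.
  by apply: nyz; apply: antis => //; apply: minz.
move=> x y; case: (tot x y) => H.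
  by case: (EM (x = y)) => [->|ne]; [right; left | left].
by case: (EM (x = y)) => [->|ne]; [right; left | right; right; split => // /esym].
Qed.
From mathcomp Require Import classical_sets.
Local Open Scope classical_set_scope.
Lemma zorn_sets (T : Type) (P : (T -> Prop) -> Prop) :
  (forall F : (T -> Prop) -> Prop, (forall X, F X -> P X) ->
     (forall X Y, F X -> F Y -> (forall t, X t -> Y t) \/ (forall t, Y t -> X t)) ->
     P (fun t => exists X, F X /\ X t)) ->
  exists M, P M /\ forall N, P N -> (forall t, M t -> N t) -> forall t, N t -> M t.
Proof.
move=> H.
have [|A [PA maxA]] := @Zorn_bigcup T P.
  move=> F FP tot.
  have := H F FP.
  have -> : (fun t => exists X, F X /\ X t) = \bigcup_(X in F) X.
    by apply/funext => t; apply/propext; split => [[X [FX Xt]]|[X FX Xt]]; exists X.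
  apply=> X Y FX FY; case: (tot X Y FX FY) => S; [left|right]; exact: S.
exists A; split => // N PN AN t Nt; apply: contrapT => nAt.
apply: (maxA N) => //; split; first by move=> x; apply: AN.
by move=> NA; apply: nAt; apply: NA.
Qed.
Local Close Scope classical_set_scope.
Lemma card_total (A B : Type) : card_le A B \/ card_le B A.
Proof.
pose P := fun F : A * B -> Prop => forall a b a' b', F (a,b) -> F (a',b') -> (a = a' <-> b = b').
have [|M [PM maxM]] := @zorn_sets (A * B)%type P.
  move=> F FP tot a b a' b' [X [FX Xab]] [Y [FY Yab]].
  case: (tot X Y FX FY) => S.
    by apply: (FP Y FY) => //; apply: S.
  by apply: (FP X FX) => //; apply: S.
case: (EM (forall a, exists b, M (a, b))) => [HA|nHA].
  left. have [f Hf] : exists f : A -> B, forall a, M (a, f a).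
    exists (fun a => proj1_sig (cid (HA a))) => a; exact: (proj2_sig (cid (HA a))).
  by exists f => x y E; have [_ H] := PM x (f x) y (f y) (Hf x) (Hf y); exact: H.
case: (EM (forall b, exists a, M (a, b))) => [HB|nHB].
  right. have [g Hg] : exists g : B -> A, forall b, M (g b, b).
    exists (fun b => proj1_sig (cid (HB b))) => b; exact: (proj2_sig (cid (HB b))).
  by exists g => x y E; have [H _] := PM (g x) x (g y) y (Hg x) (Hg y); exact: H.
exfalso.
have [a0 Ha0] : exists a0, forall b, ~ M (a0, b).
  apply: contrapT => H; apply: nHA => aa; apply: contrapT => H2; apply: H; exists aa => bb Mb; apply: H2; by exists bb.
have [b0 Hb0] : exists b0, forall a, ~ M (a, b0).
  apply: contrapT => H. apply: nHB. intro bb. apply: contrapT => H2; apply: H; exists bb => aa Ma; apply: H2; by exists aa.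
pose N := fun p : A * B => M p \/ p = (a0, b0).
have PN : P N.
  move=> a b a1 b1 [Mab|[-> ->]] [Mab1|[-> ->]].
  - exact: PM.
  - split=> E; [by subst; case: (Ha0 b) | by subst; case: (Hb0 a)].
  - split=> E; [by subst; case: (Ha0 b1) | by subst; case: (Hb0 a1)].
  - by [].
have := maxM N PN (fun t Mt => or_introl Mt) (a0, b0) (or_intror erefl).
exact: Ha0.
Qed.

Lemma wf_min (T : Type) (lt : T -> T -> Prop) : well_founded lt ->
  forall P : T -> Prop, (exists x, P x) -> exists m, P m /\ forall y, P y -> ~ lt y m.
Proof.
move=> wf P [x Px]; apply: contrapT => H.
suff : forall z, ~ P z by move/(_ x).
move=> z; elim: (wf z) => {}z _ IH Pz; apply: H; exists z; split=> // y Py lyz.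
exact: (IH y lyz Py).
Qed.

Lemma wf_asym (T : Type) (lt : T -> T -> Prop) : well_founded lt ->
  forall a b, lt a b -> lt b a -> False.
Proof.
move=> wf a; elim: (wf a) => {}a _ IH b ab ba; exact: (IH b ba a ba ab).
Qed.

Lemma wf_rec (I T : Type) (lt : I -> I -> Prop) (wf : well_founded lt)
  (B : T -> Prop) (h : (T -> Prop) -> T -> Prop) :
  exists R : I -> T -> Prop, forall i v, R i v <-> (B v \/ exists j, lt j i /\ h (R j) v).
Proof.
pose F := fun i (rec : forall j, lt j i -> T -> Prop) =>
  fun v => B v \/ exists j (p : lt j i), h (rec j p) v.
pose R := Fix wf (fun _ => T -> Prop) F.
have eqR : forall i, R i = F i (fun j _ => R j).
  move=> i; apply: Fix_eq => x f g Hfg.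
  have -> // : f = g.
  apply: functional_extensionality_dep => y; apply: functional_extensionality_dep => p.
  exact: Hfg.
exists R => i v; rewrite eqR /F; split.
  by case=> [Bv|[j [p Hj]]]; [left|right; exists j].
by case=> [Bv|[j [p Hj]]]; [left|right; exists j, p].
Qed.

Section Main.
Variables (K V : Type) (G : graph V) (L : Type).
Hypothesis HK : regular K.
Hypothesis HLinf : infinite_type L.
Hypothesis HLK : card_lt L K.
Hypothesis Hkl : kl_connected G K L.

Definition small (P : V -> Prop) := card_lt {v | P v} K.
Definition large (P : V -> Prop) := card_le K {v | P v}.
Definition subs (P Q : V -> Prop) := forall v, P v -> Q v.
Definition nS (S : V -> Prop) := fun v => ~ S v.
Definition compOf (S C : V -> Prop) := exists x, ~ S x /\ C = conn_in G (nS S) x.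

Lemma large_not_small P : large P -> ~ small P.
Proof. by move=> lP [_ nl]. Qed.

Lemma not_large_small P : ~ large P -> small P.
Proof.
move=> nl; split=> //; case: (card_total {v | P v} K) => // H; by case: nl.
Qed.

Lemma not_small_large P : ~ small P -> large P.
Proof.
move=> ns; apply: contrapT => nl; apply: ns; exact: not_large_small.
Qed.

Lemma small_sub P Q : subs P Q -> small Q -> small P.
Proof. move=> PQ sQ; apply: cle_lt_trans sQ; exact: cle_sig_sub. Qed.

Lemma large_sub P Q : subs P Q -> large P -> large Q.
Proof. move=> PQ lP; apply: cle_trans lP _; exact: cle_sig_sub. Qed.

Lemma large_small_diff P Q : large P -> small Q -> exists v, P v /\ ~ Q v.
Proof.
move=> lP sQ; apply: contrapT => H; apply: (large_not_small lP); apply: small_sub sQ.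
move=> v Pv; apply: contrapT => nQ; apply: H; by exists v.
Qed.

Lemma small_union (I : Type) (F : I -> V -> Prop) :
  card_lt I K -> (forall i, small (F i)) -> small (fun v => exists i, F i v).
Proof.
move=> IK sF; apply: not_large_small => -[h hinj].
have [_ Hreg] := HK.
have Hsm : forall i, card_lt {k : K | F i (proj1_sig (h k))} K.
  move=> i; split; first exact: cle_sig.
  move=> Kle; have [_ nl] := sF i; apply: nl; apply: cle_trans Kle _.
  exists (fun u => exist (F i) (proj1_sig (h (proj1_sig u))) (proj2_sig u)) => u w E.
  apply: sig_inj; apply: hinj; apply: sig_inj.
  by move: E => /(congr1 (@proj1_sig _ _)).
have [x Hx] := Hreg I (fun i k => F i (proj1_sig (h k))) IK Hsm.
case: (proj2_sig (h x)) => i Fi; exact: (Hx i).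
Qed.

Lemma nat_le_K : card_le nat K.
Proof. have [[f Hf] _] := HK; by exists f. Qed.

Lemma bool_lt_K : card_lt bool K.
Proof.
split.
  have [f Hf] := nat_le_K; exists (fun b : bool => f (if b then 0 else 1)).
  by move=> [] [] // /Hf.
move=> H; have [g Hg] := cle_trans nat_le_K H.
case E0: (g 0); case E1: (g 1); case E2: (g 2);
  try (by have := Hg 0 1 (etrans E0 (esym E1)));
  try (by have := Hg 0 2 (etrans E0 (esym E2)));
  try (by have := Hg 1 2 (etrans E1 (esym E2))).
Qed.

Lemma small_union2 P Q : small P -> small Q -> small (fun v => P v \/ Q v).
Proof.
move=> sP sQ.
apply: small_sub (small_union (fun b : bool => if b then P else Q) bool_lt_K _).
  by move=> v [Pv|Qv]; [exists true | exists false].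
by case.
Qed.

Lemma small_single x : small (fun v => v = x).
Proof.
split.
  have [f Hf] := nat_le_K; exists (fun _ => f 0) => u w _.
  by apply: sig_inj; rewrite (proj2_sig u) (proj2_sig w).
move=> H; have [g Hg] := cle_trans nat_le_K H.
have : (0 = 1)%N by apply: Hg; apply: sig_inj; rewrite (proj2_sig (g 0)) (proj2_sig (g 1)).
by [].
Qed.

Lemma small_empty : small (fun _ => False).
Proof.
have [f _] := nat_le_K.
split; first by exists (fun _ => f 0) => [[u []]].
move=> [g _]; by case: (g (f 0)).
Qed.

Lemma Lsub_lt (P : L -> Prop) : card_lt {i | P i} K.
Proof. apply: cle_lt_trans HLK; exact: cle_sig. Qed.

Lemma conn_refl (A : V -> Prop) x : A x -> conn_in G A x x.
Proof. by move=> Ax; split; [|split] => //; apply: rt_refl. Qed.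

Lemma conn_edge (A : V -> Prop) x y : A x -> A y -> adj G x y -> conn_in G A x y.
Proof. by move=> Ax Ay xy; split; [|split] => //; apply: rt_step. Qed.

Lemma conn_sym (A : V -> Prop) x y : conn_in G A x y -> conn_in G A y x.
Proof.
move=> [Ax [Ay H]]; split; [|split] => //.
elim: H => [u v [Au [Av uv]]|u|u v w _ IH1 _ IH2].
- by apply: rt_step; split; [|split] => //; apply: adj_sym.
- exact: rt_refl.
- exact: rt_trans IH2 IH1.
Qed.

Lemma conn_trans (A : V -> Prop) x y z : conn_in G A x y -> conn_in G A y z -> conn_in G A x z.
Proof.
move=> [Ax [Ay H1]] [_ [Az H2]]; split; [|split] => //; exact: rt_trans H1 H2.
Qed.

Lemma conn_mono (A B : V -> Prop) x y : conn_in G A x y -> subs A B -> conn_in G B x y.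
Proof.
move=> [Ax [Ay H]] AB; split; [exact: AB|split; [exact: AB|]].
elim: H => [u v [Au [Av uv]]|u|u v w _ IH1 _ IH2].
- by apply: rt_step; split; [|split] => //; apply: AB.
- exact: rt_refl.
- exact: rt_trans IH1 IH2.
Qed.

Lemma conn_ind (A : V -> Prop) (P : V -> V -> Prop) :
  (forall x, A x -> P x x) ->
  (forall x y z, A x -> A y -> adj G x y -> conn_in G A y z -> P y z -> P x z) ->
  forall x y, conn_in G A x y -> P x y.
Proof.
move=> Hr Hs x y [Ax [Ay H]].
have H1n := @clos_rt_rt1n _ _ _ _ H; clear H; move: Ax Ay; elim: H1n => [u Au _|u v w [Au [Av uv]] H1 IH Au' Aw].
  exact: Hr.
apply: (Hs u v w) => //; last exact: IH.
split; [|split] => //; exact: (@clos_rt1n_rt _ _ _ _ H1).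
Qed.

Lemma conn_restrict (A Q : V -> Prop) x y :
  conn_in G A x y -> Q x ->
  (forall u u', A u -> A u' -> adj G u u' -> Q u -> Q u') ->
  conn_in G (fun z => A z /\ Q z) x y.
Proof.
move=> H Qx HQ; move: x y H Qx.
apply: conn_ind => [x Ax Qx|x y z Ax Ay xy _ IH Qx].
  exact: conn_refl.
have Qy : Q y by apply: HQ Qx.
apply: conn_trans (IH Qy); exact: conn_edge.
Qed.

Lemma conn_cross (A Q : V -> Prop) x y :
  conn_in G A x y -> ~ Q x -> Q y ->
  exists u u', A u /\ A u' /\ adj G u u' /\ ~ Q u /\ Q u'.
Proof.
move=> H; move: x y H.
apply: conn_ind => [x Ax nQ Q'|x y z Ax Ay xy _ IH nQx Qz]; first by [].
case: (EM (Q y)) => Qy; first by exists x, y.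
exact: IH.
Qed.

Lemma comp_mem S C x : compOf S C -> C x -> ~ S x.
Proof. move=> [x0 [_ ->]] [_ [H _]]; exact: H. Qed.
Arguments comp_mem {S C x}.

Lemma comp_conn S C x y : compOf S C -> C x -> C y -> conn_in G (nS S) x y.
Proof.
move=> [x0 [_ ->]] Cx Cy; apply: conn_trans Cy; exact: conn_sym.
Qed.
Arguments comp_conn {S C x y}.

Lemma comp_closed S C x y : compOf S C -> C x -> conn_in G (nS S) x y -> C y.
Proof. move=> [x0 [_ ->]] Cx H; exact: conn_trans H. Qed.
Arguments comp_closed {S C x y}.

Lemma comp_eq S C x : compOf S C -> C x -> C = conn_in G (nS S) x.
Proof.
move=> HC Cx; apply: funext => y; apply: propext; split.
  exact: comp_conn.
exact: comp_closed.
Qed.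
Arguments comp_eq {S C x}.

Lemma comp_of S x : ~ S x -> compOf S (conn_in G (nS S) x).
Proof. by move=> nSx; exists x. Qed.
Arguments comp_of {S x}.

Lemma comp_self S x : ~ S x -> conn_in G (nS S) x x.
Proof. move=> nSx; exact: conn_refl. Qed.
Arguments comp_self {S x}.

Lemma comp_ne S C : compOf S C -> exists x, C x.
Proof. move=> [x [nSx ->]]; exists x; exact: comp_self. Qed.
Arguments comp_ne {S C}.

Lemma comp_same S C D x : compOf S C -> compOf S D -> C x -> D x -> C = D.
Proof. move=> HC HD Cx Dx; by rewrite (comp_eq HC Cx) (comp_eq HD Dx). Qed.
Arguments comp_same {S C D x}.

Lemma comp_sub S T E D x : subs S T -> compOf T E -> compOf S D -> E x -> D x -> subs E D.
Proof.
move=> ST HE HD Ex Dx y Ey; apply: (comp_closed HD Dx).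
refine (conn_mono (comp_conn HE Ex Ey) _) => v nTv Sv; apply: nTv; exact: ST.
Qed.
Arguments comp_sub {S T E D x}.

Lemma comp_edge S C x y : compOf S C -> C x -> ~ S y -> adj G x y -> C y.
Proof.
move=> HC Cx nSy xy; apply: (comp_closed HC Cx); apply: conn_edge => //.
exact: comp_mem HC Cx.
Qed.
Arguments comp_edge {S C x y}.

Lemma finite_path (B : V -> Prop) x y : conn_in G B x y ->
  exists P, small P /\ subs P B /\ P x /\ P y /\ forall z, P z -> conn_in G P x z.
Proof.
move: x y; apply: conn_ind => [x Bx|x y z Bx By xy _ [P [sP [PB [Py [Pz HP]]]]]].
  exists (fun v => v = x); split; first exact: small_single.
  split; first by move=> v ->.
  split=> //; split=> // z ->; exact: conn_refl.
exists (fun v => v = x \/ P v); split; first exact: small_union2 (small_single x) sP.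
split; first by move=> v [->|/PB].
split; first by left.
split; first by right.
move=> w [->|Pw]; first by apply: conn_refl; left.
apply: (@conn_trans _ x y); first by apply: conn_edge => //; [left|right].
refine (conn_mono (HP w Pw) _) => v Pv; by right.
Qed.


Lemma comps_lt_K S : small S -> card_lt (components G S) K.
Proof. move=> sS; have [_ H] := Hkl S sS; apply: clt_le_trans H _; exact: (proj1 HLK). Qed.

Lemma large_comp_in S D : small S -> large D -> (forall x, D x -> ~ S x) ->
  (forall x y, D x -> conn_in G (nS S) x y -> D y) ->
  exists E, compOf S E /\ large E /\ subs E D.
Proof.
move=> sS lD DS Dcl; apply: contrapT => H.
apply: (large_not_small lD).
pose F := fun (c : components G S) v => proj1_sig c v /\ subs (proj1_sig c) D.
apply: small_sub (small_union F (comps_lt_K sS) _).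
  move=> v Dv.
  have nSv := DS v Dv.
  exists (exist _ (conn_in G (nS S) v) (ex_intro _ v (conj nSv erefl))).
  split; first exact: conn_refl.
  move=> w /= Hw; exact: Dcl Dv Hw.
move=> c; case: (EM (subs (proj1_sig c) D)) => Hc.
  have Cc : compOf S (proj1_sig c) := proj2_sig c.
  have sc : small (proj1_sig c).
    apply: not_large_small => lc; apply: H; exists (proj1_sig c); split=> //.
  by apply: small_sub sc => v [].
by apply: small_sub small_empty => v [].
Qed.

Lemma V_large : large (fun _ => True).
Proof.
apply: not_small_large => sV.
have [[[C [x [nx _]]]] _] := Hkl _ sV; exact: nx.
Qed.

Lemma exists_large_comp S : small S -> exists E, compOf S E /\ large E.
Proof.
move=> sS.
have [|||E [HE [lE _]]] := @large_comp_in S (nS S) sS.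
- apply: not_small_large => sn; apply: (large_not_small V_large).
  apply: small_sub (small_union2 sS sn) => v _; exact: EM.
- by [].
- by move=> x y _ [_ [Hy _]].
by exists E.
Qed.

Lemma large_comp_below S T D : small T -> subs S T -> compOf S D -> large D ->
  exists E, compOf T E /\ large E /\ subs E D.
Proof.
move=> sT ST HD lD.
have [|||E [HE [lE ED]]] := @large_comp_in T (fun v => D v /\ ~ T v) sT.
- apply: not_small_large => sn; apply: (large_not_small lD).
  apply: small_sub (small_union2 sn sT) => v Dv.
  by case: (EM (T v)) => Tv; [right|left].
- by move=> x [].
- move=> x y [Dx nTx] Hxy; split; last by case: Hxy => _ [].
  apply: (comp_closed HD Dx); refine (conn_mono Hxy _) => v nTv Sv; apply: nTv; exact: ST.
by exists E; split=> //; split=> // v /ED [].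
Qed.

Lemma stable_exists : exists S0, small S0 /\ forall T, small T -> subs S0 T ->
  forall E E' D, compOf T E -> compOf T E' -> large E -> large E' ->
  compOf S0 D -> subs E D -> subs E' D -> E = E'.
Proof.
apply: contrapT => NS.
have step_ex : forall S, exists T, small S -> (small T /\ subs S T /\ exists E E' D,
   compOf T E /\ compOf T E' /\ large E /\ large E' /\ compOf S D /\ subs E D /\ subs E' D /\ E <> E').
  move=> S; case: (EM (small S)) => sS; last by exists S.
  apply: contrapT => H; apply: NS; exists S; split=> // T sT ST E E' D HE HE' lE lE' HD ED E'D.
  apply: contrapT => ne; apply: H; exists T => _; split=> //; split=> //.
  by exists E, E', D.
have [step Hstep] : exists step : (V -> Prop) -> (V -> Prop), forall S, small S ->
   (small (step S) /\ subs S (step S) /\ exists E E' D,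
   compOf (step S) E /\ compOf (step S) E' /\ large E /\ large E' /\ compOf S D /\
   subs E D /\ subs E' D /\ E <> E').
  exists (fun S => proj1_sig (cid (step_ex S))) => S; exact: (proj2_sig (cid (step_ex S))).
have [ltL [wfL totL]] := wo_exists L.
have [R HR] := wf_rec wfL (fun _ : V => False) step.
have sR : forall i, small (R i).
  move=> i; elim: (wfL i) => {}i _ IH.
  apply: small_sub (small_union (fun j : {j | ltL j i} => step (R (proj1_sig j))) (Lsub_lt _) _).
    by move=> v /HR [[]|[j [lji Hj]]]; exists (exist _ j lji).
  move=> [j lji] /=; have [sT _] := Hstep _ (IH j lji); exact: sT.
have sub1 : forall i, subs (R i) (step (R i)).
  by move=> i; have [_ [H _]] := Hstep _ (sR i).
have sub2 : forall i j, ltL j i -> subs (step (R j)) (R i).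
  move=> i j lji v H; apply/HR; right; by exists j.
pose Sst := fun v => exists i, step (R i) v.
have sSst : small Sst.
  apply: small_union HLK _ => i; by have [H _] := Hstep _ (sR i).
have sub3 : forall i, subs (step (R i)) Sst by move=> i v H; exists i.
have [ltV [wfV totV]] := wo_exists V.
pose le := fun a b => ltV a b \/ a = b.
have minV : forall P : V -> Prop, (exists x, P x) -> exists m, P m /\ forall y, P y -> le m y.
  move=> P HP; have [m [Pm Hm]] := wf_min wfV P HP; exists m; split=> // y Py.
  case: (totV m y) => [H|[H|H]]; [by left|by right|by case: (Hm y Py H)].
have antis : forall a b, le a b -> le b a -> a = b.
  move=> a b [ab|->] [ba|E] //; by case: (wf_asym wfV _ _ ab ba).
have Hb : forall i, exists b, exists F D, compOf (R i) D /\ compOf (step (R i)) F /\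
    subs F D /\ F b /\ ~ Sst b /\ (forall z, F z -> ~ Sst z -> le b z) /\
    exists a, D a /\ ~ Sst a /\ ~ F a /\ forall z, D z -> ~ Sst z -> le a z.
  move=> i.
  have [_ [_ [E [E' [D [HE [HE' [lE [lE' [HD [ED [E'D ne]]]]]]]]]]]] := Hstep _ (sR i).
  have [e [Ee nSe]] := large_small_diff lE sSst.
  have [a [[Da nSa] mina]] := minV (fun z => D z /\ ~ Sst z) (ex_intro _ e (conj (ED e Ee) nSe)).
  have [F [HF [lF [FD nFa]]]] : exists F, compOf (step (R i)) F /\ large F /\ subs F D /\ ~ F a.
    case: (EM (E a)) => Ea; last by exists E.
    exists E'; split=> //; split=> //; split=> // E'a; apply: ne; exact: comp_same HE HE' Ea E'a.
  have [f [Ff nSf]] := large_small_diff lF sSst.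
  have [b [[Fb nSb] minb]] := minV (fun z => F z /\ ~ Sst z) (ex_intro _ f (conj Ff nSf)).
  exists b, F, D; do 6 (split => //).
    by move=> z Fz nSz; apply: minb.
  exists a; do 3 (split => //).
  by move=> z Dz nSz; apply: mina.
have [bf Hbf] : exists bf : L -> V, forall i, exists F D, compOf (R i) D /\ compOf (step (R i)) F /\
    subs F D /\ F (bf i) /\ ~ Sst (bf i) /\ (forall z, F z -> ~ Sst z -> le (bf i) z) /\
    exists a, D a /\ ~ Sst a /\ ~ F a /\ forall z, D z -> ~ Sst z -> le a z.
  exists (fun i => proj1_sig (cid (Hb i))) => i; exact: (proj2_sig (cid (Hb i))).
have core : forall i j, ltL i j -> conn_in G (nS Sst) (bf i) (bf j) -> False.
  move=> i j lij Hc.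
  have [Fi [Di [HDi [HFi [FDi [Fbi [nSbi [minbi _]]]]]]]] := Hbf i.
  have [Fj [Dj [HDj [HFj [FDj [Fbj [nSbj [_ [aj [Daj [nSaj [nFaj minaj]]]]]]]]]]]] := Hbf j.
  have sI : subs (step (R i)) (R j) := sub2 j i lij.
  have bjFi : Fi (bf j).
    apply: (comp_closed HFi Fbi); refine (conn_mono Hc _) => v nv sv; apply: nv; exact: sub3 sv.
  have biDj : Dj (bf i).
    apply: (comp_closed HDj (FDj _ Fbj)); refine (conn_mono (conn_sym Hc) _) => v nv sv.
    by apply: nv; exact: (sub3 j v (sub1 j v sv)).
  have DjFi : subs Dj Fi := comp_sub sI HDj HFi (FDj _ Fbj) bjFi.
  have e1 : le (bf i) aj := minbi aj (DjFi _ Daj) nSaj.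
  have e2 : le aj (bf i) := minaj (bf i) biDj nSbi.
  have Eq := antis _ _ e1 e2.
  apply: nFaj; rewrite -Eq.
  apply: (comp_closed HFj Fbj); refine (conn_mono (conn_sym Hc) _) => v nv sv; apply: nv; exact: sub3 sv.
have nSbf : forall i, ~ Sst (bf i).
  by move=> i; have [F [D [_ [_ [_ [_ [H _]]]]]]] := Hbf i.
pose g : L -> components G Sst := fun i =>
  exist _ (conn_in G (nS Sst) (bf i)) (ex_intro _ (bf i) (conj (nSbf i) erefl)).
have ginj : forall i j, g i = g j -> i = j.
  move=> i j /(congr1 (@proj1_sig _ _)) /= Eij.
  have Hc : conn_in G (nS Sst) (bf i) (bf j) by rewrite Eij; apply: conn_refl; exact: nSbf.
  case: (totL i j) => [lij|[//|lji]]; first by case: (core i j lij Hc).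
  by case: (core j i lji (conn_sym Hc)).
have [_ [_ nle]] := Hkl Sst sSst.
by apply: nle; exists g.
Qed.

Lemma direction_exists : exists f : (V -> Prop) -> (V -> Prop),
  (forall T, small T -> compOf T (f T)) /\
  (forall T T', small T -> small T' -> subs T T' -> subs (f T') (f T)).
Proof.
have [S0 [sS0 Hst]] := stable_exists.
have [D0 [HD0 lD0]] := exists_large_comp sS0.
exists (fun T v => exists E x, compOf (fun u => T u \/ S0 u) E /\ large E /\ subs E D0 /\
   E x /\ conn_in G (nS T) x v); split.
  move=> T sT.
  have sT' : small (fun u => T u \/ S0 u) := small_union2 sT sS0.
  have ST' : subs S0 (fun u => T u \/ S0 u) by move=> u Su; right.
  have [E [HE [lE ED]]] := large_comp_below sT' ST' HD0 lD0.
  have [x Ex] := comp_ne HE.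
  have nTx : ~ T x by move=> Tx; apply: (comp_mem HE Ex); left.
  exists x; split=> //; apply: funext => v; apply: propext; split.
    move=> [E' [x' [HE' [lE' [E'D [E'x' Hc]]]]]].
    have EE' := Hst _ sT' ST' E E' D0 HE HE' lE lE' HD0 ED E'D.
    subst E'.
    apply: conn_trans Hc; refine (conn_mono (comp_conn HE Ex E'x') _) => u nu Tu; apply: nu; by left.
  move=> Hc; exists E, x; do 4 (split=> //).
move=> T T' sT sT' TT' v [E' [x' [HE' [lE' [E'D [E'x' Hc]]]]]].
have nx' : ~ (T x' \/ S0 x') by move=> [Tx|Sx]; apply: (comp_mem HE' E'x'); [left; exact: TT'|right].
pose E'' := conn_in G (nS (fun u => T u \/ S0 u)) x'.
have HE'' : compOf (fun u => T u \/ S0 u) E'' := comp_of nx'.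
have E''x' : E'' x' := comp_self nx'.
have sub1 : subs (fun u => T u \/ S0 u) (fun u => T' u \/ S0 u).
  by move=> u [Tu|Su]; [left; exact: TT'|right].
have E'E'' : subs E' E'' := comp_sub sub1 HE' HE'' E'x' E''x'.
have sub2 : subs S0 (fun u => T u \/ S0 u) by move=> u Su; right.
have E''D0 : subs E'' D0 := comp_sub sub2 HE'' HD0 E''x' (E'D x' E'x').
exists E'', x'; split=> //; split; first exact: large_sub E'E'' lE'.
do 2 (split=> //).
refine (conn_mono Hc _) => u nu Tu; apply: nu; exact: TT'.
Qed.

Lemma V_inhabited : exists v0 : V, True.
Proof.
have [h _] := V_large; have [f _] := nat_le_K.
by exists (proj1_sig (h (f 0))).
Qed.

Section Direction.
Variable f : (V -> Prop) -> (V -> Prop).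
Hypothesis Hf1 : forall T, small T -> compOf T (f T).
Hypothesis Hf2 : forall T T', small T -> small T' -> subs T T' -> subs (f T') (f T).

Lemma fmem T x : small T -> f T x -> ~ T x.
Proof. move=> sT fx; exact: (comp_mem (Hf1 sT) fx). Qed.

Lemma fne T : small T -> exists x, f T x.
Proof. move=> sT; exact: (comp_ne (Hf1 sT)). Qed.

Lemma fcl T x y : small T -> f T x -> conn_in G (nS T) x y -> f T y.
Proof. move=> sT fx H; exact: (comp_closed (Hf1 sT) fx H). Qed.

Lemma fconn T x y : small T -> f T x -> f T y -> conn_in G (nS T) x y.
Proof. move=> sT fx fy; exact: (comp_conn (Hf1 sT) fx fy). Qed.

Definition attached := fun v => forall C, small C -> ~ C v -> f C v.

Lemma attached_large : large attached.
Proof.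
apply: not_small_large => sA.
have [v0 _] := V_inhabited.
have vc_ex : forall T, exists p : V * (V -> Prop), small T -> subs attached T ->
    (f T p.1 /\ small p.2 /\ ~ p.2 p.1 /\ ~ f p.2 p.1).
  move=> T; case: (EM (small T /\ subs attached T)) => [[sT AT]|H]; last first.
    by exists (v0, T) => sT AT; case: H.
  have [v fTv] := fne sT.
  have nAv : ~ attached v by move=> Av; apply: (fmem sT fTv); exact: AT.
  have [C [sC [nCv nfCv]]] : exists C, small C /\ ~ C v /\ ~ f C v.
    apply: contrapT => H; apply: nAv => C sC nCv; apply: contrapT => nf; apply: H; by exists C.
  by exists (v, C).
have [vc Hvc] : exists vc : (V -> Prop) -> V * (V -> Prop), forall T, small T -> subs attached T ->
    (f T (vc T).1 /\ small (vc T).2 /\ ~ (vc T).2 (vc T).1 /\ ~ f (vc T).2 (vc T).1).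
  exists (fun T => proj1_sig (cid (vc_ex T))) => T; exact: (proj2_sig (cid (vc_ex T))).
pose U := fun T x => T x \/ ((vc T).2 x /\ f T x).
have [ltL [wfL totL]] := wo_exists L.
have [R HR] := wf_rec wfL attached U.
have AR : forall i, subs attached (R i) by move=> i v Av; apply/HR; left.
have sUgen : forall T, small T -> subs attached T -> small (U T).
  move=> T sT AT; have [_ [sC _]] := Hvc T sT AT.
  by apply: small_sub (small_union2 sT sC) => x [Tx|[Cx _]]; [left|right].
have sR : forall i, small (R i).
  move=> i; elim: (wfL i) => {}i _ IH.
  apply: small_sub (small_union2 sA (small_union (fun j : {j | ltL j i} => U (R (proj1_sig j))) (Lsub_lt _) _)).
    move=> v /HR [Av|[j [lji Hj]]]; [by left|right]; by exists (exist _ j lji).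
  move=> [j lji] /=; apply: sUgen; [exact: IH | exact: AR].
have sU : forall i, small (U (R i)) by move=> i; apply: sUgen; [exact: sR|exact: AR].
have RU : forall i, subs (R i) (U (R i)) by move=> i x Rx; left.
have UR : forall i j, ltL j i -> subs (U (R j)) (R i).
  move=> i j lji x H; apply/HR; right; by exists j.
have Inv : forall k j, ltL j k -> forall x, R k x -> ~ U (R j) x -> f (U (R j)) x.
  move=> k; elim: (wfL k) => {}k _ IH j ljk x Rkx nU.
  case/HR: Rkx => [Ax|[j' [lj'k Uj'x]]].
    by case: nU; apply: RU; apply: AR.
  case: (totL j' j) => [lj'j|[Ej|ljj']].
  - by case: nU; apply: RU; exact: (UR j j' lj'j x Uj'x).
  - by subst j'; case: nU.
  - case: Uj'x => [Rj'x|[Cx fx]].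
      exact: IH j' lj'k j ljj' x Rj'x nU.
    exact (Hf2 (sU j) (sR j') (UR j' j ljj') fx).
pose vv := fun i => (vc (R i)).1.
pose CC := fun i => (vc (R i)).2.
have Key : forall i, ~ f (U (R i)) (vv i).
  move=> i fUv.
  have [fTv [sC [nCv nfCv]]] := Hvc (R i) (sR i) (AR i).
  pose W := fun x => R i x \/ CC i x.
  have sW : small W := small_union2 (sR i) sC.
  have [w fWw] := fne sW.
  have UW : subs (U (R i)) W by move=> x [Rx|[Cx _]]; [left|right].
  have fUw : f (U (R i)) w := Hf2 (sU i) sW UW fWw.
  have Hc := fconn (sU i) fUv fUw.
  have Hc2 := conn_restrict (f (R i)) Hc fTv (fun u u' nu nu' uu' fu => comp_edge (Hf1 (sR i)) fu (fun Ru' => nu' (RU i u' Ru')) uu').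
  have Hc3 : conn_in G (nS W) (vv i) w.
    refine (conn_mono Hc2 _) => z [nUz fz] [Rz|Cz]; apply: nUz; [left|right] => //.
  have fWv : f W (vv i) := fcl sW fWw (conn_sym Hc3).
  apply: nfCv; refine (Hf2 sC sW _ fWv) => x Cx; by right.
have vnot : forall i k, ~ U (R k) (vv i).
  move=> i k.
  have [fTv [sC [nCv nfCv]]] := Hvc (R i) (sR i) (AR i).
  have nRv : ~ R i (vv i) := fmem (sR i) fTv.
  have nUi : ~ U (R i) (vv i) by move=> [Rv|[Cv _]]; [exact: nRv|exact: nCv].
  case: (totL k i) => [lki|[Eki|lik]].
  - by move=> Uv; apply: nRv; exact: (UR i k lki).
  - by subst k.
  - move=> [Rkv|[_ fkv]].
      exact: (Key i (Inv k i lik _ Rkv nUi)).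
    exact: (Key i (Hf2 (sU i) (sR k) (UR k i lik) fkv)).
pose Tst := fun x => exists k, U (R k) x.
have sTst : small Tst := small_union (fun k => U (R k)) HLK sU.
have nTst : forall i, ~ Tst (vv i) by move=> i [k Hk]; exact: (vnot i k).
have core : forall i k, ltL i k -> conn_in G (nS Tst) (vv i) (vv k) -> False.
  move=> i k lik Hc.
  have Hc1 : conn_in G (nS (U (R i))) (vv i) (vv k).
    refine (conn_mono Hc _) => z nz Uz; apply: nz; by exists i.
  have [fkv _] := Hvc (R k) (sR k) (AR k).
  have fUk : f (U (R i)) (vv k) := Hf2 (sU i) (sR k) (UR k i lik) fkv.
  exact: (Key i (fcl (sU i) fUk (conn_sym Hc1))).
pose g : L -> components G Tst := fun i =>
  exist _ (conn_in G (nS Tst) (vv i)) (ex_intro _ (vv i) (conj (nTst i) erefl)).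
have ginj : forall i j, g i = g j -> i = j.
  move=> i j /(congr1 (@proj1_sig _ _)) /= Eij.
  have Hc : conn_in G (nS Tst) (vv i) (vv j) by rewrite Eij; apply: conn_refl; exact: nTst.
  case: (totL i j) => [lij|[//|lji]]; first by case: (core i j lij Hc).
  by case: (core j i lji (conn_sym Hc)).
have [_ [_ nle]] := Hkl Tst sTst.
by apply: nle; exists g.
Qed.


Lemma minor_exists : complete_minor G K.
Proof.
pose Good := fun X : V -> Prop => small X /\ (exists a, attached a /\ X a) /\
  forall x y, X x -> X y -> conn_in G X x y.
pose Fam := fun P : (V -> Prop) -> Prop => (forall X, P X -> Good X) /\
  forall X Y, P X -> P Y -> X <> Y -> (forall v, X v -> Y v -> False) /\
     exists x y, X x /\ Y y /\ adj G x y.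
have Fcl : forall F : ((V -> Prop) -> Prop) -> Prop, (forall P, F P -> Fam P) ->
    (forall P Q, F P -> F Q -> (forall t, P t -> Q t) \/ (forall t, Q t -> P t)) ->
    Fam (fun t => exists P, F P /\ P t).
  move=> F FP tot; split.
    by move=> X [P [FP' PX]]; exact: (proj1 (FP P FP') X PX).
  move=> X Y [P [FP' PX]] [Q [FQ QY]] ne.
  case: (tot P Q FP' FQ) => PQ.
    by apply: (proj2 (FP Q FQ)) => //; apply: PQ.
  by apply: (proj2 (FP P FP')) => //; apply: PQ.
have [M [[FM1 FM2] maxM]] := @zorn_sets (V -> Prop) Fam Fcl.
case: (EM (card_lt {X | M X} K)) => [sIdx|nIdx]; last first.
  have [g ginj] : card_le K {X | M X}.
    case: (card_total {X | M X} K) => H //; apply: contrapT => nKM; apply: nIdx; by split.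
  exists (fun k => proj1_sig (g k)); split.
    move=> u; have [_ [[a [_ Xa]] _]] := FM1 _ (proj2_sig (g u)); by exists a.
  split.
    move=> u v x nuv Xu Xv.
    have ne : proj1_sig (g u) <> proj1_sig (g v).
      by move=> E; apply: nuv; apply: ginj; apply: sig_inj.
    exact: (proj1 (FM2 _ _ (proj2_sig (g u)) (proj2_sig (g v)) ne) x Xu Xv).
  split.
    move=> u x y Xx Xy; have [_ [_ H]] := FM1 _ (proj2_sig (g u)); exact: H.
  move=> u v nuv.
  have ne : proj1_sig (g u) <> proj1_sig (g v).
    by move=> E; apply: nuv; apply: ginj; apply: sig_inj.
  exact: (proj2 (FM2 _ _ (proj2_sig (g u)) (proj2_sig (g v)) ne)).
exfalso.
pose S := fun v => exists X : {X | M X}, proj1_sig X v.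
have sS : small S.
  apply: small_union sIdx _ => X; exact: (proj1 (FM1 _ (proj2_sig X))).
have inS : forall X v, M X -> X v -> S v by move=> X v MX Xv; exists (exist _ X MX).
have adjS : forall X, M X -> exists x y, X x /\ f S y /\ adj G x y.
  move=> X MX; have [sX [[a [Aa Xa]] cX]] := FM1 X MX.
  pose TX := fun v => S v /\ ~ X v.
  have sTX : small TX by apply: small_sub sS => v [].
  have fTa : f TX a by apply: Aa => // -[_ nX].
  have [w fSw] := fne sS.
  have TXS : subs TX S by move=> v [].
  have fTXw : f TX w := Hf2 sTX sS TXS fSw.
  have Hc := fconn sTX fTa fTXw.
  have nfa : ~ f S a by move=> fa; apply: (fmem sS fa); exact: inS Xa.
  have [u [u' [nu [nu' [uu' [nfu fu']]]]]] := conn_cross (f S) Hc nfa fSw.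
  have Su : S u.
    apply: contrapT => nSu; apply: nfu; exact: (comp_edge (Hf1 sS) fu' nSu (adj_sym _ _ _ uu')).
  have Xu : X u by apply: contrapT => nXu; apply: nu; split.
  by exists u, u'.
have [a0 [Aa0 nSa0]] := large_small_diff attached_large sS.
have fSa0 : f S a0 := Aa0 S sS nSa0.
have paths : forall Xs : {X | M X}, exists P, small P /\ subs P (f S) /\ P a0 /\
    (exists x y, proj1_sig Xs x /\ P y /\ adj G x y) /\ forall z, P z -> conn_in G P a0 z.
  move=> Xs; have [x [y [Xx [fSy xy]]]] := adjS _ (proj2_sig Xs).
  have Hc := fconn sS fSa0 fSy.
  have Hc2 := conn_restrict (f S) Hc fSa0 (fun u u' nu nu' uu' fu => comp_edge (Hf1 sS) fu nu' uu').
  have Hc3 : conn_in G (f S) a0 y by refine (conn_mono Hc2 _) => z [].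
  have [P [sP [Psub [Pa0 [Py Pconn]]]]] := finite_path Hc3.
  exists P; do 3 (split => //); split => //; by exists x, y.
have [Pf HPf] : exists Pf : {X | M X} -> V -> Prop, forall Xs, small (Pf Xs) /\
    subs (Pf Xs) (f S) /\ Pf Xs a0 /\
    (exists x y, proj1_sig Xs x /\ Pf Xs y /\ adj G x y) /\ forall z, Pf Xs z -> conn_in G (Pf Xs) a0 z.
  exists (fun Xs => proj1_sig (cid (paths Xs))) => Xs; exact: (proj2_sig (cid (paths Xs))).
pose Y := fun z => z = a0 \/ exists Xs, Pf Xs z.
have sY : small Y.
  apply: small_union2 (small_single a0) (small_union Pf sIdx _) => Xs; exact: (proj1 (HPf Xs)).
have YfS : subs Y (f S).
  move=> z [->|[Xs Pz]] //; exact: (proj1 (proj2 (HPf Xs)) z Pz).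
have Ynot : forall z, Y z -> ~ S z by move=> z Yz; exact: (fmem sS (YfS z Yz)).
have Ya0 : Y a0 by left.
have cY : forall z, Y z -> conn_in G Y a0 z.
  move=> z [->|[Xs Pz]]; first exact: conn_refl.
  have [_ [_ [_ [_ Hc]]]] := HPf Xs.
  refine (conn_mono (Hc z Pz) _) => w Pw; right; by exists Xs.
have GY : Good Y.
  split=> //; split; first by exists a0.
  move=> x y Yx Yy; apply: conn_trans (cY y Yy); apply: conn_sym; exact: cY.
have YM : forall X, M X -> X <> Y -> (forall v, X v -> Y v -> False) /\
     exists x y, X x /\ Y y /\ adj G x y.
  move=> X MX _; split.
    by move=> v Xv Yv; apply: (Ynot v Yv); exact: inS Xv.
  have [_ [_ [_ [[x [y [Xx [Py xy]]]] _]]]] := HPf (exist _ X MX).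
  exists x, y; split=> //; split=> //; right; by exists (exist _ X MX).
pose M' := fun Z => M Z \/ Z = Y.
have FM' : Fam M'.
  split; first by move=> X [MX|->] //; exact: FM1.
  move=> X Z [MX|->] [MZ|->] ne.
  - exact: FM2.
  - exact: YM.
  - have [H1 [x [y [Zx [Yy xy]]]]] := YM Z MZ (fun E => ne (esym E)).
    split; first by move=> v Yv Zv; exact: H1 v Zv Yv.
    exists y, x; split=> //; split=> //; exact: (adj_sym _ _ _ xy).
  - by case: ne.
have MY : M Y by apply: (maxM M' FM') => [Z MZ|]; [left|right].
by apply: nSa0; exact: inS Ya0.
Qed.
End Direction.
End Main.

Theorem mainTheorem9 (K : Type) (V : Type) (G : graph V) :
  regular K ->
  (exists L : Type, infinite_type L /\ card_lt L K /\ kl_connected G K L) ->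
  complete_minor G K.
Proof.
move=> HK [L [_ [HLK Hkl]]].
have [f [Hf1 Hf2]] := direction_exists HK HLK Hkl.
exact: (minor_exists HK HLK Hkl f Hf1 Hf2).
Qed.
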